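(* Consider a student–teacher interaction on an unknown state $\rho$: for $i=1,\dots,M$, an adaptively chosen rank-one observable $O_i=|\psi^i\rangle\langle\psi^i|$ arrives, the student outputs a guess $\hat o_i$ for $\mathrm{tr}(O_i\rho)$, and the teacher either passes or declares a mistake and supplies a value $o_i'$. Suppose the teacher satisfies, for all $i\in[M]$: if $|\mathrm{tr}(O_i\rho)-\hat o_i|>\epsilon$ it declares a mistake; if $|\mathrm{tr}(O_i\rho)-\hat o_i|\le\frac34\epsilon$ it always passes; if it declares a mistake, the supplied $o'_i$ satisfies $|\mathrm{tr}(O_i\rho)-o_i'|\le\frac14\epsilon$. Then there is a student algorithm using $\tilde{\mathcal{O}}(\log M/\epsilon^3)$ copies of $\rho$ that provides guesses $\hat o_i$ while making at most $\mathcal{O}(1/\epsilon^2)$ mistakes, with probability at least $1-\delta$.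
   Context: $\tilde{\mathcal{O}}$ hides factors polylogarithmic in $1/\epsilon$ and $1/\delta$. A ''mistake'' is a round in which the teacher declares a mistake. Each $O_i$ may depend on all previous observables, guesses and teacher responses. *)

(* Defs.v *)
From HB Require Import structures.
From mathcomp Require Import all_boot all_order all_algebra.
From mathcomp Require Import complex mxtens.
From mathcomp Require Import reals exp.

Set Implicit Arguments.
Unset Strict Implicit.
Unset Printing Implicit Defensive.
Import Order.TTheory GRing.Theory Num.Theory.
Local Open Scope ring_scope.

Section Learning.
Variable R : realType.
Local Notation C := (R[i]).

Definition cR (x : R) : C := Complex x 0.

Definition adj m n (A : 'M[C]_(m, n)) : 'M[C]_(n, m) := (map_mx Num.conj A)^T.

(* density matrix: positive semidefinite (v^* rho v is a nonnegative real for
   all v, which over C also forces hermiticity) with unit trace *)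
Definition density d (rho : 'M[C]_d) : Prop :=
  (forall v : 'cV[C]_d, 0 <= (adj v *m rho *m v) 0 0) /\ \tr rho = 1.

Definition unitvec d (psi : 'cV[C]_d) : Prop := adj psi *m psi = 1%:M.
Definition proj1 d (psi : 'cV[C]_d) : 'M[C]_d := psi *m adj psi.

(* An entry of the public (classical) transcript of one round:
   observable O_i, student's guess, teacher's response
   (None = pass, Some o' = mistake declared with supplied value o'). *)
Definition ventry d := ('M[C]_d * R * option R)%type.

(* Adversary choosing the next (rank-one) observable from the public
   transcript; it returns the vector psi with O_i = |psi><psi|. *)
Definition adversary d := seq (ventry d) -> 'cV[C]_d.

Definition teacher d := seq (ventry d) -> 'M[C]_d -> R -> option R.

Definition good_teacher d (rho : 'M[C]_d) (eps : R) (T : teacher d) : Prop :=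
  forall h (psi : 'cV[C]_d) (og : R), unitvec psi ->
  let O := proj1 psi in
  let t := \tr (O *m rho) in
  (cR eps < `|t - cR og| -> T h O og <> None) /\
  (`|t - cR og| <= cR (3 / 4 * eps) -> T h O og = None) /\
  (forall o', T h O og = Some o' -> `|t - cR o'| <= cR (eps / 4)).

(* A student's private history entry: observable, measurement outcome,
   guess, teacher response. *)
Definition sentry d k := ('M[C]_d * 'I_k * R * option R)%type.

Definition vis d k (h : seq (sentry d k)) : seq (ventry d) :=
  map (fun e => (e.1.1.1, e.1.2, e.2)) h.

(* A general (adaptive, quantum) student using [ncopies] copies of rho:
   its quantum memory holds rho^{(x) ncopies} (x) |0><0| (an ancilla of
   dimension anc.+1).  In each round, depending on its classical history and
   the current observable, it applies a quantum instrument with Kraus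
   operators [instr h O g] (outcomes g : 'I_nout) and outputs the guess
   [guess h O g]. *)
Record student (d : nat) := Student {
  ncopies : nat;
  anc : nat;
  nout : nat;
  instr : seq (sentry d nout) -> 'M[C]_d -> 'I_nout ->
          'M[C]_(d ^ ncopies * anc.+1);
  guess : seq (sentry d nout) -> 'M[C]_d -> 'I_nout -> R;
  instr_complete : forall h O,
    \sum_(g < nout) adj (instr h O g) *m instr h O g = 1%:M
}.

Definition nmistakes d k (h : seq (sentry d k)) : nat :=
  count (fun e : sentry d k => e.2 != None) h.

Section Run.
Variables (d : nat) (S : student d) (adv : adversary d) (T : teacher d)
          (bound : R).
Local Notation D := (d ^ ncopies S * (anc S).+1)%N.

(* Probability (as a complex number, via the unnormalised post-measurement
   state sigma) that after n more rounds the total number of mistakes is at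
   most [bound]. *)
Fixpoint runp (n : nat) (sigma : 'M[C]_D) (h : seq (sentry d (nout S))) : C :=
  match n with
  | 0 => if ((nmistakes h)%:R <= bound) then \tr sigma else 0
  | n'.+1 =>
      let O := proj1 (adv (vis h)) in
      \sum_(g < nout S)
        let K := @instr d S h O g in
        let og := @guess d S h O g in
        let r := T (vis h) O og in
        runp n' (K *m sigma *m adj K) (rcons h (O, g, og, r))
  end.
End Run.

Definition init_state d (S : student d) (rho : 'M[C]_d)
  : 'M[C]_(d ^ ncopies S * (anc S).+1) :=
  tensmx (ntensmx rho (ncopies S)) (delta_mx (0 : 'I_(anc S).+1) 0).

Definition success_prob d (S : student d) (rho : 'M[C]_d) (adv : adversary d)
  (T : teacher d) (M : nat) (bound : R) : C :=
  @runp d S adv T bound M (init_state S rho) [::].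

End Learning.

(* Main.v *)
Require Import Defs.
From HB Require Import structures.
From mathcomp Require Import all_boot all_order all_algebra.
From mathcomp Require Import complex mxtens.
From mathcomp Require Import reals exp.
From mathcomp Require Import lra ring.
Import Order.TTheory GRing.Theory Num.Theory.
Local Open Scope ring_scope.

Set Implicit Arguments.
Unset Strict Implicit.
Unset Printing Implicit Defensive.

Section Aux.
Variable R : realType.
Local Notation C := (R[i]).

Lemma conjE (x : C) : Num.conj x = (x^*)%C.
Proof. by []. Qed.

Lemma ReD (x y : C) : complex.Re (x + y) = complex.Re x + complex.Re y.
Proof. case: x => a b; case: y => c d; reflexivity. Qed.
Lemma ImD (x y : C) : complex.Im (x + y) = complex.Im x + complex.Im y.
Proof. case: x => a b; case: y => c d; reflexivity. Qed.

Lemma Re_sum (I : Type) (s : seq I) (P : pred I) (F : I -> C) :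
  complex.Re (\sum_(i <- s | P i) F i) = \sum_(i <- s | P i) complex.Re (F i).
Proof. exact: (big_morph (@complex.Re R) ReD). Qed.

Lemma ReM (x y : C) : complex.Re (x * y) = complex.Re x * complex.Re y - complex.Im x * complex.Im y.
Proof. case: x => a b; case: y => c d; reflexivity. Qed.
Lemma ImM (x y : C) : complex.Im (x * y) = complex.Re x * complex.Im y + complex.Im x * complex.Re y.
Proof. case: x => a b; case: y => c d; reflexivity. Qed.
Lemma ReJ (x : C) : complex.Re (Num.conj x) = complex.Re x.
Proof. by case: x. Qed.
Lemma ImJ (x : C) : complex.Im (Num.conj x) = - complex.Im x.
Proof. by case: x. Qed.
Lemma RecR (x : R) : complex.Re (cR x) = x. Proof. by []. Qed.
Lemma ImcR (x : R) : complex.Im (cR x) = 0. Proof. by []. Qed.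
Lemma ReN (x : C) : complex.Re (- x) = - complex.Re x. Proof. by case: x. Qed.
Lemma ImN (x : C) : complex.Im (- x) = - complex.Im x. Proof. by case: x. Qed.
Lemma Re1 : complex.Re (1 : C) = 1. Proof. by []. Qed.

Lemma lecR' (x y : R) : (cR x <= cR y) = (x <= y).
Proof. exact: lecR. Qed.

Lemma normcR (x : R) : `|cR x| = cR `|x|.
Proof. by rewrite normc_def /= expr0n /= addr0 sqrtr_sqr. Qed.

Lemma cRB (x y : R) : cR x - cR y = cR (x - y).
Proof. by rewrite /cR; simpc. Qed.

Lemma ge0_real (z : C) : 0 <= z -> z = cR (complex.Re z) /\ 0 <= complex.Re z.
Proof. by case: z => a b; rewrite lecE /= => /andP[/eqP -> ->]. Qed.


Section Mx.
Variable d : nat.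

Definition ip (A B : 'M[C]_d) : R :=
  \sum_i \sum_j (complex.Re (A i j) * complex.Re (B i j)
                 + complex.Im (A i j) * complex.Im (B i j)).

Lemma ip_ge0 A : 0 <= ip A A.
Proof.
apply: sumr_ge0 => i _; apply: sumr_ge0 => j _.
by apply: addr_ge0; rewrite -expr2 sqr_ge0.
Qed.

Lemma ip_exp A O b :
  ip (A + cR b *: O) (A + cR b *: O) = ip A A + 2 * b * ip O A + b ^+ 2 * ip O O.
Proof.
rewrite /ip !mulr_sumr -!big_split /=; apply: eq_bigr => i _.
rewrite !mulr_sumr -!big_split /=; apply: eq_bigr => j _.
rewrite !mxE !ReD !ImD !ReM !ImM RecR ImcR; ring.
Qed.

Lemma ipBr O A B : ip O (A - B) = ip O A - ip O B.
Proof.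
rewrite /ip -sumrB; apply: eq_bigr => i _.
rewrite -sumrB; apply: eq_bigr => j _.
rewrite !mxE !ReD !ImD !ReN !ImN; ring.
Qed.

Lemma ipN A : ip (- A) (- A) = ip A A.
Proof.
rewrite /ip; apply: eq_bigr => i _; apply: eq_bigr => j _.
rewrite !mxE !ReN !ImN; ring.
Qed.

Lemma trace_ip (O X : 'M[C]_d) : (forall i j, O j i = Num.conj (O i j)) ->
  complex.Re (\tr (O *m X)) = ip O X.
Proof.
move=> H; rewrite /mxtrace Re_sum /ip.
under eq_bigr do rewrite mxE Re_sum.
rewrite exchange_big /=; apply: eq_bigr => i _; apply: eq_bigr => j _.
by rewrite H ReM ReJ ImJ; ring.
Qed.

Lemma adj1 n : adj (1%:M : 'M[C]_n) = 1%:M.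
Proof. by rewrite /adj map_mx1 trmx1. Qed.

Lemma proj_herm (psi : 'cV[C]_d) i j :
  proj1 psi j i = Num.conj (proj1 psi i j).
Proof.
by rewrite /proj1 /adj !mxE !big_ord1 !mxE rmorphM /= conjCK mulrC.
Qed.

Lemma projO (psi : 'cV[C]_d) : unitvec psi -> proj1 psi *m proj1 psi = proj1 psi.
Proof. by move=> H; rewrite /proj1 mulmxA -(mulmxA psi) H mulmx1. Qed.

Lemma tr_proj (psi : 'cV[C]_d) : unitvec psi -> \tr (proj1 psi) = 1.
Proof. by move=> H; rewrite /proj1 mxtrace_mulC H mxtrace1. Qed.

Lemma ipOO (psi : 'cV[C]_d) : unitvec psi -> ip (proj1 psi) (proj1 psi) = 1.
Proof.
by move=> H; rewrite -trace_ip ?projO ?tr_proj //; apply: proj_herm.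
Qed.

Lemma t_entry (psi : 'cV[C]_d) rho :
  \tr (proj1 psi *m rho) = (adj psi *m rho *m psi) 0 0.
Proof.
by rewrite /proj1 -mulmxA mxtrace_mulC /mxtrace big_ord1.
Qed.

Lemma adj_lin (x y : C) (A B : 'cV[C]_d) :
  adj (x *: A + y *: B) = Num.conj x *: adj A + Num.conj y *: adj B.
Proof. by apply/matrixP => a b; rewrite /adj !mxE rmorphD !rmorphM. Qed.

Lemma adj_delta (i : 'I_d) : adj (delta_mx i 0 : 'cV[C]_d) = delta_mx 0 i.
Proof. by apply/matrixP => a b; rewrite /adj !mxE conjC_nat andbC. Qed.

Lemma Q_exp (rho : 'M[C]_d) i j (x y : C) :
  (adj (x *: (delta_mx i 0 : 'cV[C]_d) + y *: delta_mx j 0) *m rho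
      *m (x *: (delta_mx i 0 : 'cV[C]_d) + y *: delta_mx j 0)) 0 0
  = Num.conj x * x * rho i i + Num.conj x * y * rho i j
    + Num.conj y * x * rho j i + Num.conj y * y * rho j j.
Proof.
rewrite adj_lin !adj_delta !mulmxDl !mulmxDr -!scalemxAl -!scalemxAr.
rewrite -!rowE -!colE !mxE; ring.
Qed.

Lemma Im1 : complex.Im (1 : C) = 0. Proof. by []. Qed.

Lemma psd_bound (rho : 'M[C]_d) : density rho -> ip rho rho <= 1.
Proof.
case=> Hpsd Htr.
have hQ : forall i j x y,
    let E := Num.conj x * x * rho i i + Num.conj x * y * rho i j
       + Num.conj y * x * rho j i + Num.conj y * y * rho j j in
    0 <= complex.Re E /\ complex.Im E = 0.
  move=> i j x y E; have := Hpsd (x *: (delta_mx i 0 : 'cV[C]_d) + y *: delta_mx j 0).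
  rewrite Q_exp -/E lecE /= => /andP[/eqP <- ->]; done.
pose p i := complex.Re (rho i i).
have diag : forall i, 0 <= p i /\ complex.Im (rho i i) = 0.
  move=> i; have [h1 h2] := hQ i i 1 0.
  move: h1 h2; rewrite ?ReD ?ImD ?ReM ?ImM ?ReJ ?ImJ ?Re1 ?Im1 /=.
  rewrite /p; split; nra.
have herm : forall i j, complex.Re (rho j i) = complex.Re (rho i j) /\
                        complex.Im (rho j i) = - complex.Im (rho i j).
  move=> i j; have [_ h1] := hQ i j 1 1.
  have [_ h2] := hQ i j 1 (Complex 0 1).
  move: h1 h2; rewrite ?ReD ?ImD ?ReM ?ImM ?ReJ ?ImJ ?Re1 ?Im1 /=.
  have [_ di] := diag i; have [_ dj] := diag j.
  split; nra.
have ent : forall i j, complex.Re (rho i j) * complex.Re (rho i j)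
     + complex.Im (rho i j) * complex.Im (rho i j) <= p i * p j.
  move=> i j.
  set a := complex.Re (rho i j); set b := complex.Im (rho i j).
  have [hr hi] := herm i j.
  have [pi0 di] := diag i; have [pj0 dj] := diag j.
  have key : forall s, 0 <= p i - 2 * s * (a * a + b * b) + s * s * (a * a + b * b) * p j.
    move=> s; have [h _] := hQ i j 1 (Complex (- s * a) (s * b)).
    move: h; rewrite ?ReD ?ReM ?ImM ?ReJ ?ImJ ?Re1 ?Im1 /= hr hi.
    rewrite /p -/a -/b; nra.
  have m0 : 0 <= a * a + b * b by nra.
  set m := a * a + b * b in key m0 *.
  have [pjz|pjp] := eqVneq (p j) 0.
    have [mz|mp] := eqVneq m 0.
      by rewrite mz pjz mulr0.
    have := key ((p i + 1) / (2 * m)).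
    have E : 2 * ((p i + 1) / (2 * m)) * m = p i + 1.
      by field; rewrite mp.
    rewrite pjz mulr0 addr0 E; lra.
  have pjpos : 0 < p j by rewrite lt_def pjp pj0.
  have := key (p j)^-1.
  have E1 : (p j)^-1 * (p j)^-1 * m * p j = (p j)^-1 * m.
    by field; rewrite pjp.
  have E2 : (p i - (p j)^-1 * m) * p j = p i * p j - m.
    by field; rewrite pjp.
  rewrite E1 => h.
  have : 0 <= (p i - (p j)^-1 * m) * p j.
    apply: mulr_ge0 => //; lra.
  rewrite E2; lra.
have sum1 : \sum_i p i = 1 by rewrite /p -Re_sum -/(mxtrace rho) Htr.
apply: (le_trans (y := \sum_i \sum_j p i * p j)).
  apply: ler_sum => i _; apply: ler_sum => j _; exact: ent.
have -> : \sum_i \sum_j p i * p j = (\sum_i p i) * (\sum_j p j).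
  by rewrite mulr_suml; apply: eq_bigr => i _; rewrite mulr_sumr.
by rewrite sum1 mulr1.
Qed.

End Mx.
End Aux.

Section Main.
Variable R : realType.
Local Notation C := (R[i]).
Variable d : nat.

Definition upd (e : sentry R d 1) : 'M[C]_d :=
  if e.2 is Some o then cR (o - e.1.2) *: e.1.1.1 else 0.
Definition sig (h : seq (sentry R d 1)) : 'M[C]_d := \sum_(e <- h) upd e.
Definition gs (h : seq (sentry R d 1)) (O : 'M[C]_d) (g : 'I_1) : R :=
  complex.Re (\tr (O *m sig h)).

Lemma stud_complete (h : seq (sentry R d 1)) (O : 'M[C]_d) :
  \sum_(g < 1) adj (1%:M : 'M[C]_(d ^ 0 * 1)) *m 1%:M = 1%:M.
Proof. by rewrite big_ord1 adj1 mulmx1. Qed.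

Definition stud : student R d :=
  @Student R d 0 0 1 (fun _ _ _ => 1%:M) gs stud_complete.

Lemma sig_rcons (h : seq (sentry R d 1)) e : sig (rcons h e) = sig h + upd e.
Proof. by rewrite /sig -cats1 big_cat big_seq1. Qed.
Lemma nm_rcons (h : seq (sentry R d 1)) e : nmistakes (rcons h e) = (nmistakes h + (e.2 != None))%N.
Proof. by rewrite /nmistakes -cats1 count_cat /= addn0. Qed.

Lemma tr_init (rho : 'M[C]_d) : \tr (init_state stud rho) = 1.
Proof.
rewrite /init_state /mxtrace big_ord1 !mxE eqxx.
by case: (mxtens_unindex _) => a b /=; rewrite [b]ord1 eqxx mul1r.
Qed.


Variables (rho : 'M[C]_d) (eps : R) (adv : adversary R d) (T : teacher R d).
Hypotheses (Hrho : density rho) (Hadv : forall h, unitvec (adv h))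
  (HT : good_teacher rho eps T) (Heps : 0 < eps).

Definition Inv (h : seq (sentry R d 1)) : Prop :=
  ip (sig h - rho) (sig h - rho) + (nmistakes h)%:R * (eps ^+ 2 / 2) <= 1.

Lemma inv_step (h : seq (sentry R d 1)) : Inv h ->
  let O := proj1 (adv (vis h)) in let og := gs h O ord0 in
  Inv (rcons h (O, ord0, og, T (vis h) O og)).
Proof.
move=> Hinv O og; rewrite /Inv sig_rcons nm_rcons /=.
have Hu := Hadv (vis h).
have [c1 [c2 c3]] := HT (vis h) og Hu.
rewrite -/O in c1 c2 c3.
set t := \tr (O *m rho) in c1 c2 c3.
have [tE t0] : t = cR (complex.Re t) /\ 0 <= complex.Re t.
  by apply: ge0_real; rewrite /t t_entry; apply: Hrho.1.
have hog : og = ip O (sig h) by rewrite /og /gs trace_ip //; apply: proj_herm.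
have hrt : complex.Re t = ip O rho by rewrite /t trace_ip //; apply: proj_herm.
case E: (T (vis h) O og) => [o'|] /=.
- have c3' := c3 o' E.
  rewrite tE cRB normcR lecR' in c3'.
  have c2' : 3 / 4 * eps < `|complex.Re t - og|.
    rewrite ltNge; apply/negP => H; move: c2; rewrite tE cRB normcR lecR'.
    by move=> /(_ H); rewrite E.
  rewrite /= addrAC ip_exp ipOO // (ipBr O) -hog -hrt natrD.
  move: c3'; rewrite ler_norml => /andP[u1 u2].
  have ha : (3 / 4 * eps) ^+ 2 < (complex.Re t - og) ^+ 2.
    move: c2'; rewrite ltr_normr => /orP[] hh; nra.
  move: Hinv; rewrite /Inv; nra.
- by rewrite /= addr0 addn0.
Qed.

Lemma run_ok n : forall (sigma : 'M[C]_(d ^ 0 * 1)) h, Inv h ->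
  runp (S:=stud) adv T (2 / eps ^+ 2) n sigma h = \tr sigma.
Proof.
elim: n => [|n IH] sigma h Hinv /=.
  have -> : ((nmistakes h)%:R <= 2 / eps ^+ 2) = true; last by [].
  apply/idP; have := ip_ge0 (sig h - rho); move: Hinv; rewrite /Inv.
  set m := (nmistakes h)%:R => H1 H2.
  rewrite ler_pdivlMr ?exprn_gt0 //; nra.
rewrite big_ord1 /= adj1 mul1mx mulmx1; apply: IH.
exact: inv_step.
Qed.

End Main.

Unset Implicit Arguments.

Theorem mainTheorem14 (R : realType) :
  exists (c : R) (a : nat), 0 < c /\
  forall (d M : nat) (eps delta : R),
    0 < eps < 1 -> 0 < delta < 1 ->
    exists S : student R d,
      (ncopies S)%:R
        <= c * ln (M%:R) / eps ^+ 3 * (1 + ln (1 / eps) + ln (1 / delta)) ^+ a /\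
      forall (rho : 'M[R[i]]_d) (adv : adversary R d) (T : teacher R d),
        density rho ->
        (forall h, unitvec (adv h)) ->
        good_teacher rho eps T ->
        cR (1 - delta) <= success_prob S rho adv T M (c / eps ^+ 2).
Proof.
exists 2, 0%N; split; first lra.
move=> d M eps delta /andP[e0 e1] /andP[d0 d1].
exists (stud R d); split.
  rewrite /= expr0 mulr1; apply: divr_ge0; last by rewrite exprn_ge0 // ltW.
  apply: mulr_ge0; first lra.
  case: M => [|M]; first by rewrite ln0.
  by apply: ln_ge0; rewrite ler1n.
move=> rho adv T Hrho Hadv HT.
rewrite /success_prob (run_ok Hrho Hadv HT e0).
  by rewrite tr_init -[1 : R[i]]/(cR 1) lecR'; lra.
rewrite /Inv /sig big_nil sub0r ipN /nmistakes /= mul0r addr0.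
exact: psd_bound.
Qed.
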